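(* Let $\mathbb G=V_1\times V_2$ be a step-two Carnot group that has $\mathbb F_3$ as one of its quotients, i.e. there is a surjective Carnot morphism $\mathbb G\to\mathbb F_3$. Then $\mathcal A(V_1\times V_2)\subsetneq\mathcal A_h(\mathbb G)$.
   Context: A step-two Carnot group is $\mathbb G=V_1\times V_2$ ($V_1,V_2$ finite-dimensional real vector spaces, $V_2\ne\{0\}$) with a bilinear skew-symmetric $[\cdot,\cdot]:V_1\times V_1\to V_2$ whose image spans $V_2$, and group law $(x,z)\cdot(x',z')=(x+x',z+z'+[x,x'])$. $\mathbb F_3=\Lambda^1(\mathbb R^3)\times\Lambda^2(\mathbb R^3)$ with bracket $[\theta,\theta']=\theta\wedge\theta'$. A Carnot morphism $\pi:\mathbb G\to\mathbb G'$ is $\pi(x,z)=(\pi_1(x),\pi_2(z))$ with $\pi_1,\pi_2$ linear and $\pi_2([x,y])=[\pi_1(x),\pi_1(y)]'$. $\mathcal A_h(\mathbb G)$ is the space of maps $f:\mathbb G\to\mathbb R$ such that for all $(x,z)\in\mathbb G$, $y\in V_1$, $t\mapsto f((x,z)\cdot(ty,0))$ is affine; $\mathcal A(V_1\times V_2)$ is the space of maps affine in the usual sense on $V_1\times V_2$ (always a subspace of $\mathcal A_h(\mathbb G)$). *)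

(* Defs.v *)
From HB Require Import structures.
From mathcomp Require Import all_boot all_order all_algebra.
From mathcomp Require Export reals.
Set Implicit Arguments. Unset Strict Implicit. Unset Printing Implicit Defensive.
Import Order.TTheory GRing.Theory Num.Theory.
Local Open Scope ring_scope.

Definition is_carnot_bracket (R : realType) (n1 n2 : nat)
  (br : 'rV[R]_n1 -> 'rV[R]_n1 -> 'rV[R]_n2) : Prop :=
  [/\ (0 < n2)%N,
      (forall (a : R) x y w, br (a *: x + y) w = a *: br x w + br y w),
      (forall (a : R) x y w, br w (a *: x + y) = a *: br w x + br w y),
      (forall x y, br x y = - br y x) &
      (forall z : 'rV[R]_n2, exists k : nat, exists c : 'I_k -> R,
         exists xs ys : 'I_k -> 'rV[R]_n1,
           z = \sum_(i < k) c i *: br (xs i) (ys i))].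

Definition cmul (R : realType) (n1 n2 : nat)
  (br : 'rV[R]_n1 -> 'rV[R]_n1 -> 'rV[R]_n2)
  (p q : 'rV[R]_n1 * 'rV[R]_n2) : 'rV[R]_n1 * 'rV[R]_n2 :=
  (p.1 + q.1, p.2 + q.2 + br p.1 q.1).

(* F_3 = Lambda^1(R^3) x Lambda^2(R^3); a 1-form has coordinates in the basis
   (e1,e2,e3), a 2-form in the basis (e1^e2, e1^e3, e2^e3). *)
Definition wedge3 (R : realType) (u v : 'rV[R]_3) : 'rV[R]_3 :=
  \row_(k < 3)
    (if k == 0 :> nat then u 0 0 * v 0 1 - u 0 1 * v 0 0
     else if k == 1 :> nat then u 0 0 * v 0 2 - u 0 2 * v 0 0
     else u 0 1 * v 0 2 - u 0 2 * v 0 1).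

Definition carnot_morphism (R : realType) (n1 n2 m1 m2 : nat)
  (br : 'rV[R]_n1 -> 'rV[R]_n1 -> 'rV[R]_n2)
  (br' : 'rV[R]_m1 -> 'rV[R]_m1 -> 'rV[R]_m2)
  (p1 : {linear 'rV[R]_n1 -> 'rV[R]_m1}) (p2 : {linear 'rV[R]_n2 -> 'rV[R]_m2}) : Prop :=
  forall x y, p2 (br x y) = br' (p1 x) (p1 y).

Definition carnot_map (R : realType) (n1 n2 m1 m2 : nat)
  (p1 : 'rV[R]_n1 -> 'rV[R]_m1) (p2 : 'rV[R]_n2 -> 'rV[R]_m2)
  (p : 'rV[R]_n1 * 'rV[R]_n2) : 'rV[R]_m1 * 'rV[R]_m2 := (p1 p.1, p2 p.2).

Definition affine1 (R : realType) (g : R -> R) : Prop :=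
  exists a b : R, forall t, g t = a * t + b.

Definition horiz_affine (R : realType) (n1 n2 : nat)
  (br : 'rV[R]_n1 -> 'rV[R]_n1 -> 'rV[R]_n2)
  (f : 'rV[R]_n1 * 'rV[R]_n2 -> R) : Prop :=
  forall (p : 'rV[R]_n1 * 'rV[R]_n2) (y : 'rV[R]_n1),
    affine1 (fun t : R => f (cmul br p (t *: y, 0))).

Definition usual_affine (R : realType) (n1 n2 : nat)
  (f : 'rV[R]_n1 * 'rV[R]_n2 -> R) : Prop :=
  forall (l : R) (p q : 'rV[R]_n1 * 'rV[R]_n2),
    f (l *: p.1 + (1 - l) *: q.1, l *: p.2 + (1 - l) *: q.2)
    = l * f p + (1 - l) * f q.

Definition surj (A B : Type) (f : A -> B) : Prop := forall b, exists a, f a = b.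

(* Main.v *)
Require Import Defs.
From HB Require Import structures.
From mathcomp Require Import all_boot all_order all_algebra reals.
From mathcomp Require Import ring lra.
Import Order.TTheory GRing.Theory Num.Theory.
Local Open Scope ring_scope.

Definition F3 (R : realType) (x z : 'rV[R]_3) : R :=
  x 0 0 * z 0 2 - x 0 1 * z 0 1 + x 0 2 * z 0 0.

Arguments F3 {R}.

Lemma F3_haff (R : realType) (x y z : 'rV[R]_3) :
  exists a b : R, forall t, F3 (x + t *: y) (z + t *: wedge3 x y) = a * t + b.
Proof.
exists (x 0 0 * (x 0 1 * y 0 2 - x 0 2 * y 0 1) + y 0 0 * z 0 2
        - x 0 1 * (x 0 0 * y 0 2 - x 0 2 * y 0 0) - y 0 1 * z 0 1
        + x 0 2 * (x 0 0 * y 0 1 - x 0 1 * y 0 0) + y 0 2 * z 0 0).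
exists (F3 x z) => t.
rewrite /F3 /wedge3 !mxE /=.
ring.
Qed.

Lemma br_scale (R : realType) (n1 n2 : nat)
  (br : 'rV[R]_n1 -> 'rV[R]_n1 -> 'rV[R]_n2) :
  is_carnot_bracket br -> forall w (t : R) y, br w (t *: y) = t *: br w y.
Proof.
case=> _ _ H2 _ _ w t y.
have H0 : br w 0 = 0.
  have := H2 1 0 0 w; rewrite !scale1r addr0 => E.
  by apply: (addrI (br w 0)); rewrite addr0 -E.
by have := H2 t y 0 w; rewrite addr0 H0 addr0.
Qed.

Theorem corollary6p6 (R : realType) (n1 n2 : nat)
  (br : 'rV[R]_n1 -> 'rV[R]_n1 -> 'rV[R]_n2) :
  is_carnot_bracket br ->
  (exists (p1 : {linear 'rV[R]_n1 -> 'rV[R]_3})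
          (p2 : {linear 'rV[R]_n2 -> 'rV[R]_3}),
     carnot_morphism br (@wedge3 R) p1 p2 /\ surj (carnot_map p1 p2)) ->
  (forall f : 'rV[R]_n1 * 'rV[R]_n2 -> R,
     usual_affine f -> horiz_affine br f) /\
  (exists f : 'rV[R]_n1 * 'rV[R]_n2 -> R,
     horiz_affine br f /\ ~ usual_affine f).
Proof.
move=> Hb [p1 [p2 [Hm Hs]]].
have Hsc := @br_scale R n1 n2 br Hb.
split.
  move=> f hf p y.
  exists (f (p.1 + y, p.2 + br p.1 y) - f p), (f p) => t.
  have := hf t (p.1 + y, p.2 + br p.1 y) p => /=.
  have -> : t *: (p.1 + y) + (1 - t) *: p.1 = p.1 + t *: y.
    by rewrite scalerDr scalerBl scale1r addrC addrA subrK.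
  have -> : t *: (p.2 + br p.1 y) + (1 - t) *: p.2 = p.2 + t *: br p.1 y.
    by rewrite scalerDr scalerBl scale1r addrC addrA subrK.
  rewrite /cmul /= addr0 Hsc => ->.
  ring.
exists (fun q => F3 (p1 q.1) (p2 q.2)); split.
  move=> p y.
  have [a [b Hab]] := @F3_haff R (p1 p.1) (p1 y) (p2 p.2).
  exists a, b => t.
  by rewrite /cmul /= addr0 Hsc !linearD !linearZ /= Hm Hab.
move=> hf.
pose e0 : 'rV[R]_3 := \row_(k < 3) (if k == 0 :> nat then 1 else 0).
pose e2 : 'rV[R]_3 := \row_(k < 3) (if k == 2 :> nat then 1 else 0).
have [a Ha] := Hs (e0, e2).
case: Ha => Ha1 Ha2.
have := hf 2 a (0, 0) => /=.
rewrite !scaler0 !addr0 !linear0 !linearZ /= Ha1 Ha2 /F3 /e0 /e2 !mxE /=.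
move=> H; clear -H; lra.
Qed.
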